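(* Every $d$-dimensional perfect lattice $\Lambda$ has a $\mathbb Z$-basis $f_1,\dots,f_d$ such that every minimal vector $v=\sum_{i=1}^d\beta_if_i$ of $\Lambda$ (with $\beta_i\in\mathbb Z$) satisfies $|\beta_i|\le2^{i-1}I_d$ for $i=1,\dots,d$.
   Context: Minimal vectors are the nonzero vectors of minimal length. A $d$-dimensional lattice is perfect if $\{v\otimes v\}$, $v$ ranging over its minimal vectors, spans the $\binom{d+1}{2}$-dimensional space of symmetric tensors in $(\Lambda\otimes\mathbb R)^{\otimes2}$. A lattice is well-rounded if its minimal vectors span $\Lambda\otimes\mathbb R$. $I_d$ is the smallest integer such that whenever $\Lambda$ is a $d$-dimensional lattice and $\Lambda'\subseteq\Lambda$ is a $d$-dimensional well-rounded sublattice whose minimal vectors are all minimal vectors of $\Lambda$, the index $[\Lambda:\Lambda']$ is at most $I_d$. *)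

(* Defs.v *)
From Stdlib Require Import Reals ZArith List.
Open Scope R_scope.

(* Vectors of R^d are represented as functions nat -> R; only the first d
   coordinates matter, lattice vectors have zero coordinates beyond d. *)
Definition vec := nat -> R.

Fixpoint sumR (n : nat) (f : nat -> R) : R :=
  match n with
  | O => 0
  | S m => sumR m f + f m
  end.

Definition zcomb (d : nat) (c : nat -> Z) (b : nat -> vec) : vec :=
  fun j => sumR d (fun i => IZR (c i) * b i j).

Definition basis_Rd (d : nat) (b : nat -> vec) : Prop :=
  (forall i j, (i < d)%nat -> (d <= j)%nat -> b i j = 0) /\
  (forall c : nat -> R,
     (forall j, (j < d)%nat -> sumR d (fun i => c i * b i j) = 0) ->
     forall i, (i < d)%nat -> c i = 0).

Definition is_lattice (d : nat) (L : vec -> Prop) : Prop :=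
  exists b, basis_Rd d b /\
    forall v, L v <-> exists c : nat -> Z, forall j, v j = zcomb d c b j.

Definition is_Zbasis (d : nat) (L : vec -> Prop) (f : nat -> vec) : Prop :=
  (forall i, (i < d)%nat -> L (f i)) /\
  (forall v, L v -> exists c : nat -> Z, forall j, v j = zcomb d c f j) /\
  (forall c : nat -> Z, (forall j, zcomb d c f j = 0) ->
     forall i, (i < d)%nat -> c i = 0%Z).

Definition sqnorm (d : nat) (v : vec) : R := sumR d (fun j => v j * v j).

Definition nonzero (d : nat) (v : vec) : Prop := exists j, (j < d)%nat /\ v j <> 0.

Definition minimal_vec (d : nat) (L : vec -> Prop) (v : vec) : Prop :=
  L v /\ nonzero d v /\
  forall w, L w -> nonzero d w -> sqnorm d v <= sqnorm d w.

(* {v (x) v : v minimal} spans the space of symmetric d x d tensors *)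
Definition perfect (d : nat) (L : vec -> Prop) : Prop :=
  forall S : nat -> nat -> R,
    (forall i j, (i < d)%nat -> (j < d)%nat -> S i j = S j i) ->
    exists l : list (R * vec),
      Forall (fun p => minimal_vec d L (snd p)) l /\
      forall i j, (i < d)%nat -> (j < d)%nat ->
        S i j = fold_right (fun p acc => fst p * snd p i * snd p j + acc) 0 l.

Definition well_rounded (d : nat) (L : vec -> Prop) : Prop :=
  forall x : vec,
    exists l : list (R * vec),
      Forall (fun p => minimal_vec d L (snd p)) l /\
      forall j, (j < d)%nat -> x j = fold_right (fun p acc => fst p * snd p j + acc) 0 l.

Definition has_index (L L' : vec -> Prop) (n : nat) : Prop :=
  exists reps : list vec,
    length reps = n /\
    Forall L reps /\
    (forall a b, (a < n)%nat -> (b < n)%nat -> a <> b ->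
       ~ L' (fun j => nth a reps (fun _ => 0) j - nth b reps (fun _ => 0) j)) /\
    (forall v, L v -> exists a, (a < n)%nat /\
       L' (fun j => v j - nth a reps (fun _ => 0) j)).

Definition index_bound (d : nat) (I : nat) : Prop :=
  forall L L' : vec -> Prop,
    is_lattice d L -> is_lattice d L' ->
    (forall v, L' v -> L v) ->
    well_rounded d L' ->
    (forall v, minimal_vec d L' v -> minimal_vec d L v) ->
    forall n, has_index L L' n -> (n <= I)%nat.

Definition is_I (d : nat) (I : nat) : Prop :=
  index_bound d I /\ forall I', index_bound d I' -> (I <= I')%nat.

(* Main.v *)
Require Import Defs.
From Stdlib Require Import Reals ZArith List ClassicalEpsilon.
Set Warnings "-notation-overridden,-ambiguous-paths,-notation-incompatible-prefix".
From HB Require Import structures.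
From mathcomp Require Import all_boot all_order all_algebra.
From mathcomp Require Import Rstruct ssrZ zify.
From Stdlib Require Import Lia.
Set Implicit Arguments. Unset Strict Implicit. Unset Printing Implicit Defensive.
Import Order.TTheory GRing.Theory Num.Theory.
Local Open Scope ring_scope.
Lemma sumR_big n (F : nat -> R) : sumR n F = \sum_(i < n) F i.
Proof. elim: n => [|n IH] /=; first by rewrite big_ord0. by rewrite big_ord_recr /= IH. Qed.

Lemma IZR_int (z : Z) : IZR z = (int_of_Z z)%:~R.
Proof.
have pos p : IZR (Zpos p) = (int_of_Z (Zpos p))%:~R.
  by rewrite IZRposE INRE /= Pos_to_natE.
case: z => [|p|p] //.
rewrite (_ : Zneg p = (- Zpos p)%R) // opp_IZR pos (raddfN (GRing.Additive.clone _ _ int_of_Z _)).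
by rewrite mulrNz.
Qed.

Lemma List_nth_seq (T : Type) (l : list T) n d : List.nth n l d = seq.nth d l n.
Proof. by elim: l n => [|x l IH] [|n] //=. Qed.
Definition combo n (r : 'rV[int]_n) (g : nat -> vec) : vec :=
  fun j => \sum_(i < n) (r 0 i)%:~R * g i j.
Definition rowof n (c : nat -> Z) : 'rV[int]_n := \row_(i < n) int_of_Z (c i).
Definition rowfun n (r : 'rV[int]_n) : nat -> Z :=
  fun i => if insub i is Some k then Z_of_int (r 0 k) else Z0.
Definition fam n (A : 'M[int]_n) (g : nat -> vec) : nat -> vec :=
  fun k => if @insub _ (fun k => k < n)%N _ k is Some k' then combo (row k' A) g else (fun _ => 0).

Lemma zcomb_combo n c g j : zcomb n c g j = combo (rowof n c) g j.
Proof.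
rewrite /zcomb sumR_big /combo; apply: eq_bigr => i _.
by rewrite mxE IZR_int.
Qed.

Lemma rowfun_ord n (r : 'rV[int]_n) (i : 'I_n) : rowfun r i = Z_of_int (r 0 i).
Proof. by rewrite /rowfun; case: insubP => [k _ /val_inj -> //|]; rewrite ltn_ord. Qed.

Lemma rowfunK n (r : 'rV[int]_n) : rowof n (rowfun r) = r.
Proof. by apply/rowP => i; rewrite mxE rowfun_ord Z_of_intK. Qed.

Lemma fam_ord n (A : 'M[int]_n) g (k : 'I_n) : fam A g k = combo (row k A) g.
Proof. by rewrite /fam; case: insubP => [k' _ /val_inj -> //|]; rewrite ltn_ord. Qed.

Lemma combo_mul n (r : 'rV[int]_n) (A : 'M[int]_n) g j :
  combo (r *m A) g j = combo r (fam A g) j.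
Proof.
rewrite /combo.
under [RHS]eq_bigr => k _ do rewrite fam_ord /combo mulr_sumr.
rewrite exchange_big /=; apply: eq_bigr => i _.
rewrite mxE rmorph_sum /= mulr_suml; apply: eq_bigr => k _.
by rewrite mxE rmorphM /= mulrA.
Qed.

Lemma combo_add n (r1 r2 : 'rV[int]_n) g j :
  combo (r1 + r2) g j = combo r1 g j + combo r2 g j.
Proof.
by rewrite /combo -big_split; apply: eq_bigr => i _; rewrite mxE rmorphD mulrDl.
Qed.

Lemma combo_opp n (r : 'rV[int]_n) g j : combo (- r) g j = - combo r g j.
Proof.
by rewrite /combo -sumrN; apply: eq_bigr => i _; rewrite mxE rmorphN mulNr.
Qed.

Lemma combo_sub n (r1 r2 : 'rV[int]_n) g j :
  combo (r1 - r2) g j = combo r1 g j - combo r2 g j.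
Proof. by rewrite combo_add combo_opp. Qed.

Lemma combo0 n g j : combo (0 : 'rV[int]_n) g j = 0.
Proof. by rewrite /combo big1 // => i _; rewrite mxE mul0r. Qed.

Lemma combo_out n (r : 'rV[int]_n) (b : nat -> vec) j :
  basis_Rd n b -> (n <= j)%N -> combo r b j = 0.
Proof.
move=> [hb _] hj; rewrite /combo big1 // => i _.
have hi := ltn_ord i; rewrite hb ?mulr0 //; lia.
Qed.

Lemma combo_inj n (r : 'rV[int]_n) (b : nat -> vec) :
  basis_Rd n b -> (forall j, (j < n)%N -> combo r b j = 0) -> r = 0.
Proof.
move=> [_ hb] h.
pose c : nat -> R := fun i => if @insub _ (fun k => k < n)%N _ i is Some k then (r 0 k)%:~R else 0.
have cE (i : 'I_n) : c i = (r 0 i)%:~R.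
  by rewrite /c; case: insubP => [k' _ /val_inj -> //|]; rewrite ltn_ord.
have := hb c; rewrite /is_true => hc.
apply/rowP => i; rewrite mxE; apply/eqP; rewrite -(intr_eq0 R) -cE; apply/eqP.
apply: hc; last by have := ltn_ord i; lia.
move=> j hj'; have hj : (j < n)%N by lia.
 rewrite sumR_big -[RHS](h j hj) /combo.
by apply: eq_bigr => k _; rewrite cE.
Qed.
Definition Msub n (A : 'M[int]_n) (b : nat -> vec) : vec -> Prop :=
  fun v => exists x : nat -> Z, forall j, v j = zcomb n x (fam A b) j.

Lemma MsubP n (A : 'M[int]_n) b v :
  Msub A b v <-> exists r, forall j, v j = combo (r *m A) b j.
Proof.
split=> [[x hx]|[r hr]].
  by exists (rowof n x) => j; rewrite hx zcomb_combo combo_mul.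
by exists (rowfun r) => j; rewrite hr zcomb_combo rowfunK combo_mul.
Qed.

Lemma LP n (L : vec -> Prop) b :
  (forall v, L v <-> exists c : nat -> Z, forall j, v j = zcomb n c b j) ->
  forall v, L v <-> exists r : 'rV[int]_n, forall j, v j = combo r b j.
Proof.
move=> hL v; rewrite hL; split=> [[c hc]|[r hr]].
  by exists (rowof n c) => j; rewrite hc zcomb_combo.
by exists (rowfun r) => j; rewrite hr zcomb_combo rowfunK.
Qed.

Lemma combo_eq_inj n (r1 r2 : 'rV[int]_n) b : basis_Rd n b ->
  (forall j, (j < n)%N -> combo r1 b j = combo r2 b j) -> r1 = r2.
Proof.
move=> hb h; apply/eqP; rewrite -subr_eq0; apply/eqP; apply: (combo_inj hb) => j hj.
by rewrite combo_sub h // subrr.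
Qed.

Lemma length_size (T : Type) (l : list T) : List.length l = size l.
Proof. by elim: l => //= x l ->. Qed.

Lemma unit_int_det n (U : 'M[int]_n) : U \in unitmx -> `|\det U|%N = 1%N.
Proof.
rewrite unitmxE => /orP [] /eqP ->; by [].
Qed.
Lemma mod_uniq (u v m : nat) (q dd : int) : (u < m)%N -> (v < m)%N ->
  `|dd|%N = m -> u%:Z - v%:Z = q * dd -> u = v.
Proof.
move=> hu hv hm h.
have := congr1 absz h; rewrite abszM hm => h'.
case hq: (absz q) h' => [|k] h'.
  by move: h; rewrite (_ : q = 0) ?mul0r; [move/eqP; rewrite subr_eq0 => /eqP [] | apply/eqP; rewrite -absz_eq0 hq].
exfalso. move: h'. rewrite mulSn. lia.
Qed.
Lemma Forall_map_all (T U : Type) (P : U -> Prop) (f : T -> U) (s : seq T) :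
  (forall x, P (f x)) -> Forall P (map f s).
Proof. by move=> h; elim: s => //= x s IH; constructor. Qed.

Lemma index_det n (L : vec -> Prop) b (A : 'M[int]_n) :
  basis_Rd n b -> (forall v, L v <-> exists r : 'rV[int]_n, forall j, v j = combo r b j) ->
  \det A != 0 -> has_index L (Msub A b) `|\det A|%N.
Proof.
move=> hb hL hA.
have [P uP [Q uQ [dd _ eA]]] := int_Smith_normal_form A.
set D := \matrix_(i, j) _ in eA.
have eD : D = diag_mx (\row_i dd`_i) by apply/matrixP => i j; rewrite !mxE.
pose m (i : 'I_n) := absz (nth 0%R dd i).
have detA : `|\det A|%N = (\prod_(i < n) m i)%N.
  rewrite eA !det_mulmx !abszM (unit_int_det uP) (unit_int_det uQ) mul1n muln1 eD det_diag.
  rewrite (big_morph absz abszM (erefl _)); apply: eq_bigr => i _; by rewrite mxE.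
have mpos i : (0 < m i)%N.
  rewrite lt0n; apply/negP => /eqP mi0; move: hA; rewrite -absz_eq0 detA.
  by rewrite (bigD1 i) //= mi0 mul0n.
pose T := {dffun forall i : 'I_n, 'I_(m i)}.
pose rrow (t : T) : 'rV[int]_n := \row_i ((t i : nat)%:Z).
pose rep (t : T) : vec := combo (rrow t *m Q) b.
have szE : size (enum T) = `|\det A|%N.
  rewrite -cardE card_dep_ffun detA foldrE big_map big_enum /=.
  by apply: eq_big => [i|i _]; [rewrite inE | rewrite card_ord].
exists (map rep (enum T)).
split; first by rewrite length_size size_map.
split; first by apply: Forall_map_all => t; apply/hL; exists (rrow t *m Q).
split.
  move=> a c ha hc hac /MsubP [x hx].
  have ha' : (a < size (enum T))%N by rewrite szE; lia.
  have hc' : (c < size (enum T))%N by rewrite szE; lia.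
  have t0 : T.
    case: (pickP (fun _ : T => true)) => [t0 _ //|T0]; exfalso; move: ha'.
    by rewrite -cardE (@eq_card0 _ T) // => z; rewrite !inE T0.
  move: hx; rewrite !List_nth_seq (nth_map t0 _ _ ha') (nth_map t0 _ _ hc') => hx.
  set ta := nth t0 (enum T) a in hx; set tc := nth t0 (enum T) c in hx.
  have e : rrow ta *m Q - rrow tc *m Q = x *m A.
    by apply: (combo_eq_inj hb) => j hj; rewrite combo_sub -hx.
  have e2 : rrow ta - rrow tc = (x *m P) *m D.
    by apply: (can_inj (mulmxK uQ)); rewrite mulmxBl e eA !mulmxA.
  have etac : ta = tc.
    apply/ffunP => i; apply/val_inj.
    apply: (@mod_uniq _ _ (m i) ((x *m P) 0 i) (nth 0%R dd i)); rewrite ?ltn_ord //.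
    have := congr1 (fun M : 'M[int]_(1,n) => M 0 i) e2; rewrite /= eD mul_mx_diag !mxE.
    by [].
  have : a == c by rewrite -(nth_uniq t0 ha' hc' (enum_uniq T)) -/ta -/tc etac.
  by move/eqP.
move=> v /hL [r hr].
have [y ey0] : {y | y = r *m invmx Q} by eexists.
have tlt (i : 'I_n) : (absz (modz (y 0%R i) (nth 0%R dd i)) < m i)%N.
  have nz : nth 0%R dd i != 0 by rewrite -absz_eq0 -lt0n mpos.
  have h1 := modz_ge0 (y 0 i) nz; have h2 := ltz_mod (y 0 i) nz.
  rewrite /m -ltz_nat gez0_abs //.
pose t : T := [ffun i => Ordinal (tlt i)].
pose q : 'rV[int]_n := \row_i (divz (y 0 i) (nth 0%R dd i)).
have ey : y = q *m D + rrow t.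
  apply/rowP => i; rewrite eD mul_mx_diag !mxE ffunE /=.
  have nz : nth 0%R dd i != 0 by rewrite -absz_eq0 -lt0n mpos.
  by rewrite gez0_abs ?modz_ge0 // -divz_eq.
have ti : t \in enum T by rewrite mem_enum.
exists (index t (enum T)); split.
  have := index_mem t (enum T); rewrite ti szE => /idP; lia.
apply/MsubP; exists (q *m invmx P) => j.
rewrite List_nth_seq (nth_map t) ?index_mem // nth_index // hr /rep -[LHS](combo_sub r).
congr (combo _ b j).
have -> : r = y *m Q by rewrite ey0 mulmxKV.
rewrite ey mulmxDl addrK eA !mulmxA mulmxKV //.
Qed.
Definition Bm n (b : nat -> vec) : 'M[R]_n := \matrix_(i, j) b i j.

Lemma combo_mx n (r : 'rV[int]_n) b (j : 'I_n) :
  combo r b j = ((map_mx (intr : int -> R) r) *m Bm n b) 0 j.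
Proof. by rewrite /combo mxE; apply: eq_bigr => i _; rewrite !mxE. Qed.

Lemma fam_mx n (A : 'M[int]_n) b (k j : 'I_n) :
  fam A b k j = ((map_mx (intr : int -> R) A) *m Bm n b) k j.
Proof. by rewrite fam_ord /combo mxE; apply: eq_bigr => i _; rewrite !mxE. Qed.

Lemma Bm_unit n b : basis_Rd n b -> Bm n b \in unitmx.
Proof.
move=> [_ hb]; rewrite unitmxE unitfE; apply/negP => /det0P [v vnz vB].
move/eqP: vnz; apply; apply/rowP => i0.
pose c : nat -> R := fun i => if @insub _ (fun k => k < n)%N _ i is Some k then v 0 k else 0.
have cE (i : 'I_n) : c i = v 0 i.
  by rewrite /c; case: insubP => [k' _ /val_inj -> //|]; rewrite ltn_ord.
rewrite mxE -cE; apply: hb; last by have := ltn_ord i0; lia.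
move=> j hj'; have hj : (j < n)%N by lia.
rewrite sumR_big; have := congr1 (fun M : 'M[R]_(1,n) => M 0 (Ordinal hj)) vB.
rewrite /= !mxE => h; rewrite -[RHS]h; by apply: eq_bigr => k _; rewrite cE mxE.
Qed.

Lemma fold_map_sum (T : Type) (F : T -> R * vec) (s : seq T) j :
  fold_right (fun p acc => fst p * snd p j + acc) 0 (map F s) =
  \sum_(k <- s) fst (F k) * snd (F k) j.
Proof. by elim: s => [|x s IH] /=; rewrite ?big_nil ?big_cons ?IH. Qed.

Lemma fam_in_Msub n (A : 'M[int]_n) b (k : 'I_n) : Msub A b (fam A b k).
Proof.
by apply/MsubP; exists (delta_mx 0 k) => j; rewrite fam_ord -rowE.
Qed.

Lemma Msub_L n (L : vec -> Prop) b (A : 'M[int]_n) :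
  (forall v, L v <-> exists r : 'rV[int]_n, forall j, v j = combo r b j) ->
  forall v, Msub A b v -> L v.
Proof. by move=> hL v /MsubP [r hr]; apply/hL; exists (r *m A). Qed.

Lemma Msub_lattice n b (A : 'M[int]_n) :
  basis_Rd n b -> \det A != 0 -> is_lattice n (Msub A b).
Proof.
move=> hb hA; exists (fam A b); split; last by [].
split.
  move=> i j hi hj; have hi' : (i < n)%N by lia.
  by rewrite (fam_ord _ _ (Ordinal hi')) combo_out //; lia.
move=> c hc i hi'; have hi : (i < n)%N by lia.
pose cr : 'rV[R]_n := \row_k c k.
have uA : map_mx (intr : int -> R) A \in unitmx.
  by rewrite unitmxE unitfE det_map_mx intr_eq0.
have : cr *m (map_mx (intr : int -> R) A *m Bm n b) = 0.
  apply/rowP => j; rewrite !mxE -[RHS](hc j); last by have := ltn_ord j; lia.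
  rewrite sumR_big; apply: eq_bigr => k _; by rewrite mxE fam_mx.
rewrite mulmxA => /(congr1 (mulmx^~ (invmx (Bm n b)))).
rewrite mulmxK ?Bm_unit // mul0mx => /(congr1 (mulmx^~ (invmx (map_mx (intr : int -> R) A)))).
rewrite mulmxK // mul0mx => /rowP /(_ (Ordinal hi)); by rewrite !mxE.
Qed.
Lemma Msub_min n (L : vec -> Prop) b (A : 'M[int]_n) :
  (forall v, L v <-> exists r : 'rV[int]_n, forall j, v j = combo r b j) ->
  (forall k : 'I_n, minimal_vec n L (fam A b k)) ->
  (forall k : 'I_n, minimal_vec n (Msub A b) (fam A b k)) /\
  (forall v, minimal_vec n (Msub A b) v -> minimal_vec n L v).
Proof.
move=> hL hm; split.
  move=> k; have [_ [nz hmk]] := hm k; split; first exact: fam_in_Msub.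
  split=> // w hw nzw; apply: hmk => //; exact: Msub_L hL _ hw.
move=> v [hv [nz hmin]]; split; first exact: Msub_L hL _ hv.
split=> // w hw nzw.
have [j [hj' _]] := nz; have hj : (j < n)%N by lia.
have [_ [nz0 hmin0]] := hm (Ordinal hj).
apply: Rle_trans (hmin _ (fam_in_Msub _ _ _) nz0) (hmin0 _ hw nzw).
Qed.

Lemma Msub_wr n (L : vec -> Prop) b (A : 'M[int]_n) :
  basis_Rd n b ->
  (forall v, L v <-> exists r : 'rV[int]_n, forall j, v j = combo r b j) ->
  \det A != 0 ->
  (forall k : 'I_n, minimal_vec n L (fam A b k)) ->
  well_rounded n (Msub A b).
Proof.
move=> hb hL hA hm x.
have [hmM _] := Msub_min hL hm.
have uA : map_mx (intr : int -> R) A *m Bm n b \in unitmx.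
  by rewrite unitmx_mul Bm_unit // andbT unitmxE unitfE det_map_mx intr_eq0.
pose xr : 'rV[R]_n := \row_j x j.
pose t := xr *m invmx (map_mx (intr : int -> R) A *m Bm n b).
exists (map (fun k : 'I_n => (t 0 k, fam A b k)) (enum 'I_n)).
split; first by apply: Forall_map_all.
move=> j hj'; have hj : (j < n)%N by lia.
rewrite fold_map_sum /= big_enum /=.
have -> : x j = xr 0 (Ordinal hj) by rewrite mxE.
rewrite -[xr](mulmxKV uA) -/t mxE.
apply: eq_big => [k|k _]; [by rewrite inE | ]; by rewrite (fam_mx A b k (Ordinal hj)).
Qed.

Lemma det_le n (L : vec -> Prop) b (I : nat) (A : 'M[int]_n) :
  basis_Rd n b ->
  (forall v, L v <-> exists c : nat -> Z, forall j, v j = zcomb n c b j) ->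
  index_bound n I ->
  (forall k : 'I_n, minimal_vec n L (fam A b k)) ->
  (`|\det A| <= I)%N.
Proof.
move=> hb hL0 hI hm.
have hL := LP hL0.
have [->|hA] := eqVneq (\det A) 0; first by [].
have [_ hmin] := Msub_min hL hm.
apply/ssrnat.leP; apply: (hI L (Msub A b)) => //.
- by exists b.
- exact: Msub_lattice.
- exact: Msub_L hL.
- exact: Msub_wr.
- exact: index_det.
Qed.
Lemma tri0 n (W : 'M[int]_n) : exists U H : 'M[int]_n,
  [/\ U \in unitmx, W = H *m U & forall i j : 'I_n, (i < j)%N -> H i j = 0].
Proof.
elim: n W => [|n IH] W.
  by exists 1%:M, W; split; [exact: unitmx1 | rewrite mulmx1 | case].
pose r : 'M[int]_(1, 1 + n) := usubmx (W : 'M_(1 + n)).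
have [Lr uL [Rr uR [dd _ er]]] := int_Smith_normal_form r.
pose W1 : 'M[int]_(1 + n) := W *m invmx Rr.
have ur0 : ursubmx W1 = 0.
  apply/matrixP => i j; rewrite !mxE.
  have : (r *m invmx Rr) i (rshift 1 j) = 0.
    rewrite er mulmxK // !mxE big1 // => k _; rewrite !mxE.
    by rewrite (ord1 k) /= mulr0n mulr0.
  move=> h; rewrite -[RHS]h [RHS]mxE; apply: eq_bigr => k _; by rewrite [r _ _]mxE.
have [U' [H' [uU' eW' tH']]] := IH (drsubmx W1).
exists (block_mx 1 0 0 U' *m Rr), (block_mx (ulsubmx W1) 0 (dlsubmx W1) H'); split.
- rewrite unitmx_mul uR andbT unitmxE (@det_lblock _ 1 n) det1 mul1r -unitmxE //.
- rewrite mulmxA (@mulmx_block _ 1 n 1 n 1 n) !mulmx0 !mul0mx !mulmx1 !addr0 !add0r -eW' -ur0 submxK.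
  by rewrite /W1 mulmxKV.
- move=> i j; case: (@split_ordP 1 n i) => i0 -> ; case: (@split_ordP 1 n j) => j0 ->.
  + by rewrite (ord1 i0) (ord1 j0).
  + by rewrite (@block_mxEur _ 1 n 1 n) mxE.
  + by rewrite /= (ord1 j0) ltnNge. 
  + by rewrite (@block_mxEdr _ 1 n 1 n) /= ltn_add2l; apply: tH'.
Qed.
Lemma col_red n (H : 'M[int]_n) (c : 'cV[int]_n) (j : 'I_n) :
  (forall i k : 'I_n, (i < k)%N -> H i k = 0) -> (forall i, H i i != 0) ->
  exists t : 'cV[int]_n, (forall m : 'I_n, (m <= j)%N -> t m 0 = 0) /\
     (forall i : 'I_n, (j < i)%N -> leq (absz ((c - H *m t)%R i 0%R)) (absz (H i i))).
Proof.
move=> tH nzH.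
suff: forall k, (k <= n)%N -> exists t : 'cV[int]_n,
   (forall m : 'I_n, (m <= j)%N -> t m 0 = 0) /\
   (forall i : 'I_n, (j < i)%N -> (i < k)%N -> leq (absz ((c - H *m t)%R i 0%R)) (absz (H i i))).
  move=> /(_ n (leqnn n)) [t [h1 h2]]; exists t; split=> // i hi; exact: h2.
elim=> [|k IH] hk.
  by exists 0; split=> [m _|//]; rewrite mxE.
have [t [ht1 ht2]] := IH (ltnW hk).
case: (leqP k j) => hkj.
  exists t; split=> // i hi hik; apply: ht2 => //; lia.
pose kk := Ordinal hk.
have [rr err] : {rr | rr = c - H *m t} by eexists.
pose s := divz (rr kk 0) (H kk kk).
exists (t + s *: delta_mx kk 0); split.
  move=> m hm; rewrite !mxE ht1 // add0r.
  have -> : (m == kk) = false by apply/negbTE; apply/eqP => emk; move: hm; rewrite emk /=; lia.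
  by rewrite andFb mulr0.
have E : c - H *m (t + s *: delta_mx kk 0) = rr - s *: col kk H.
  by rewrite err mulmxDr -scalemxAr -colE opprD addrA.
move=> i hi hik; rewrite E !mxE.
case: (ltngtP i k) => hik'.
- by rewrite tH // mulr0 subr0 err; apply: ht2.
- lia.
- have -> : i = kk by apply: val_inj.
  have nz := nzH kk.
  rewrite /s {1}(divz_eq (rr kk 0) (H kk kk)) addrC addKr.
  have h1 := modz_ge0 (rr kk 0) nz; have h2 := ltz_mod (rr kk 0) nz.
  rewrite -lez_nat gez0_abs // abszE; exact: ltW.
Qed.
Lemma trig_diag_nz n (H : 'M[int]_n) :
  (forall i j : 'I_n, (i < j)%N -> H i j = 0) -> \det H != 0 -> forall i, H i i != 0.
Proof.
move=> tH; rewrite det_trig; last exact/is_trig_mxP.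
by move/prodf_neq0 => h i; apply: h.
Qed.

Lemma tri n (W : 'M[int]_n) : \det W != 0 -> exists U H : 'M[int]_n,
  [/\ U \in unitmx, W = H *m U, (forall i j : 'I_n, (i < j)%N -> H i j = 0) &
      (forall i j : 'I_n, leq (absz (H i j)) (absz (H i i)))].
Proof.
move=> hW.
have [U0 [H0 [u0 e0 t0]]] := tri0 W.
have nz : forall i, H0 i i != 0.
  apply: trig_diag_nz => //; move: hW; rewrite e0 det_mulmx mulf_eq0 negb_or.
  by case/andP.
have [tf htf] := fin_all_exists (fun j : 'I_n => col_red (col j H0) j t0 nz).
pose T : 'M[int]_n := \matrix_(m, j) (tf j) m 0.
pose V : 'M[int]_n := 1%:M - T.
have T0 (m j : 'I_n) : (m <= j)%N -> T m j = 0 by move=> hm; rewrite mxE (proj1 (htf j)).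
have sum0 (i j : 'I_n) : (i <= j)%N -> \sum_m H0 i m * T m j = 0.
  move=> hij; apply: big1 => m _.
  case: (leqP m j) => hmj; first by rewrite T0 // mulr0.
  by rewrite t0 ?mul0r //; apply: leq_ltn_trans hmj.
have HE (i j : 'I_n) : (H0 *m V) i j = H0 i j - \sum_m H0 i m * T m j.
  by rewrite mulmxBr mulmx1 !mxE.
have uV : V \in unitmx.
  rewrite unitmxE det_trig; last first.
    apply/is_trig_mxP => i j hij; rewrite mxE [(- T) i j]mxE (T0 i j (ltnW hij)) oppr0 addr0 mxE.
    by rewrite (_ : (i == j) = false) // -val_eqE; exact: ltn_eqF.
  rewrite big1 ?unitr1 // => i _; by rewrite mxE [(- T) i i]mxE (T0 i i (leqnn _)) oppr0 addr0 mxE eqxx.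
exists (invmx V *m U0), (H0 *m V); split.
- by rewrite unitmx_mul unitmx_inv uV.
- by rewrite e0 mulmxA mulmxK.
- by move=> i j hij; rewrite HE t0 // sum0 ?subr0 // ltnW.
- move=> i j; rewrite (HE i j) (HE i i) (sum0 i i (leqnn _)) subr0.
  case: (ltngtP j i) => hji.
  + have := (proj2 (htf j)) i hji; rewrite !mxE.
    suff E : \sum_m H0 i m * T m j = \sum_m H0 i m * tf j m 0 by rewrite E.
    by apply: eq_bigr => m _; rewrite mxE.
  + by rewrite t0 // sum0 ?subr0 // ltnW.
  + have -> : j = i by apply: val_inj.
    by rewrite sum0 ?subr0.
Qed.
Definition repl n (H : 'M[int]_n) (k : 'I_n) (beta : 'rV[int]_n) : 'M[int]_n :=
  \matrix_(i, j) if i == k then beta 0 j else H i j.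

Lemma adj_repl n (H : 'M[int]_n) (beta : 'rV[int]_n) (k : 'I_n) :
  (beta *m \adj H) 0 k = \det (repl H k beta).
Proof.
rewrite (expand_det_row _ k) mxE; apply: eq_bigr => j _.
rewrite !mxE eqxx; congr (_ * _).
rewrite /cofactor; congr (_ * \det _); apply/matrixP => a c.
by rewrite !mxE eq_sym (negbTE (neq_lift k a)).
Qed.

Lemma bound n (H : 'M[int]_n) (beta : 'rV[int]_n) (I : nat) (j : 'I_n) :
  \det H != 0 ->
  (forall k, (absz (\det (repl H k beta)) <= I)%N) ->
  (forall k, (absz (H k j) <= absz (\det H))%N) ->
  (absz (beta 0%R j) <= I * #|[pred k | H k j != 0]|)%N.
Proof.
move=> hH hD hHj.
have key : (\det H) *: beta = (beta *m \adj H) *m H.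
  by rewrite -mulmxA mul_adj_mx mul_mx_scalar.
have := congr1 (fun M : 'M[int]_(1, n) => M 0 j) key; rewrite /= !mxE => e.
rewrite -(@leq_pmul2l (absz (\det H))); last by rewrite absz_gt0.
rewrite -abszM e; apply/(@idP ((`|_|%N)%:Z <= (_ : nat)%:Z)); rewrite abszE.
apply: le_trans (ler_norm_sum _ _ _) _.
rewrite (bigID (fun k => H k j != 0)) /= [X in _ + X]big1 ?addr0; last first.
  by move=> k /negbNE /eqP ->; rewrite mulr0 normr0.
apply: le_trans (_ : \sum_(k | H k j != 0) (I%:Z * (absz (\det H))%:Z) <= _).
  apply: ler_sum => k _; rewrite normrM adj_repl !abszE.
  apply: ler_pM => //; rewrite lez_nat //.
rewrite sumr_const; set c := #|_|; rewrite -mulr_natr natz -!PoszM lez_nat mulnCA mulnA; exact: leqnn.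
Qed.
Lemma minimal_ext n (L : vec -> Prop) b v w :
  (forall v, L v <-> exists r : 'rV[int]_n, forall j, v j = combo r b j) ->
  (forall j, v j = w j) -> minimal_vec n L v -> minimal_vec n L w.
Proof.
move=> hL e [hv [[j [hj nz]] hm]]; split.
  by move/hL: hv => [r hr]; apply/hL; exists r => k; rewrite -e.
split; first by exists j; rewrite -e.
move=> u hu nzu; have := hm u hu nzu.
rewrite /sqnorm !sumR_big (eq_bigr (fun j : 'I_n => w j * w j)) //.
by move=> k _; rewrite !e.
Qed.

Lemma fold_sum_nth (l : list (R * vec)) i j d :
  fold_right (fun p acc => fst p * snd p i * snd p j + acc) 0 l =
  \sum_(p < size l) fst (seq.nth d l p) * snd (seq.nth d l p) i * snd (seq.nth d l p) j.
Proof.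
elim: l => [|x l IH] /=; first by rewrite big_ord0.
by rewrite big_ord_recl /= IH.
Qed.

Definition coord n (b : nat -> vec) (v : vec) : 'rV[int]_n :=
  epsilon (inhabits 0) (fun r : 'rV[int]_n => forall j, v j = combo r b j).

Lemma coordP n (L : vec -> Prop) b v :
  (forall v, L v <-> exists r : 'rV[int]_n, forall j, v j = combo r b j) ->
  L v -> forall j, v j = combo (coord n b v) b j.
Proof. move=> hL /hL h; exact: (epsilon_spec (inhabits 0) _ h). Qed.

Lemma get_W n (L : vec -> Prop) b :
  basis_Rd n b ->
  (forall v, L v <-> exists r : 'rV[int]_n, forall j, v j = combo r b j) ->
  perfect n L ->
  exists W : 'M[int]_n, \det W != 0 /\ forall k : 'I_n, minimal_vec n L (fam W b k).
Proof.
move=> hb hL hP.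
have [|l [hl hS]] := hP (fun i j => if Nat.eqb i j then 1 else 0).
  by move=> i j _ _; rewrite Nat.eqb_sym.
pose d : R * vec := (0, fun _ => 0).
pose m := size l.
pose vp (p : 'I_m) := snd (seq.nth d l p).
have vmin (p : 'I_m) : minimal_vec n L (vp p).
  move: hl; rewrite Forall_forall => hl; apply: hl.
  rewrite /vp -List_nth_seq; apply: List.nth_In; rewrite length_size; apply/ssrnat.ltP.
  exact: ltn_ord.
pose C : 'M[int]_(m, n) := \matrix_(p, i) coord n b (vp p) 0 i.
pose CR := map_mx (intr : int -> R) C.
have VE (p : 'I_m) (j : 'I_n) : (CR *m Bm n b) p j = vp p j.
  rewrite (coordP hL (proj1 (vmin p))) /combo mxE; apply: eq_bigr => i _.
  by rewrite !mxE.
pose Lam : 'M[R]_m := diag_mx (\row_p fst (seq.nth d l p)).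
have eI : 1%:M = (CR *m Bm n b)^T *m (Lam *m (CR *m Bm n b)).
  apply/matrixP => i j.
  have h := hS i j (ssrnat.ltP (ltn_ord i)) (ssrnat.ltP (ltn_ord j)).
  rewrite (fold_sum_nth _ _ _ d) in h.
  rewrite [LHS]mxE [RHS]mxE.
  transitivity (if Nat.eqb i j then (1 : R) else 0).
    case: (Nat.eqb_spec i j) => [/val_inj -> | hij]; first by rewrite eqxx.
    by rewrite (_ : (i == j) = false) //; apply/negbTE/eqP => e; apply: hij; rewrite e.
  rewrite h; apply: eq_bigr => p _.
  rewrite mul_diag_mx !mxE -!/(vp p) -(VE p i) -(VE p j).
  by rewrite !mxE [RHS]mulrCA mulrA.
have rk : row_full CR.
  rewrite /row_full eqn_leq rank_leq_col /=.
  have := mxrankM_maxr (CR *m Bm n b)^T (Lam *m (CR *m Bm n b)).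
  rewrite -eI mxrank1 => h1; apply: leq_trans h1 _.
  apply: leq_trans (mxrankM_maxr _ _) _; exact: mxrankM_maxl.
pose W := rowsub (fullrankfun rk) C.
exists W; split.
  have := fullrowsub_unit rk.
  have -> : rowsub (fullrankfun rk) CR = map_mx (intr : int -> R) W.
    by apply/matrixP => i j; rewrite !mxE.
  by rewrite unitmxE unitfE det_map_mx intr_eq0.
move=> k; apply: (minimal_ext hL _ (vmin (fullrankfun rk k))) => j.
rewrite fam_ord /combo.
rewrite (coordP hL (proj1 (vmin (fullrankfun rk k)))) /combo.
by apply: eq_bigr => i _; rewrite !mxE.
Qed.
Lemma card_tail d (j : 'I_d) (P : pred 'I_d) :
  (forall k : 'I_d, P k -> (d - j.+1 <= k)%N) -> (#|P| <= j.+1)%N.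
Proof.
move=> hP; rewrite -sum1_card big_mkcond /=.
apply: leq_trans (_ : (\sum_(k < d) ((d - j.+1 <= k)%N : nat) <= _)%N).
  apply: leq_sum => k _; case: ifP => // /hP ->; by [].
rewrite -(big_mkord xpredT (fun k => ((d - j.+1 <= k)%N : nat))).
have hj : (j.+1 <= d)%N := ltn_ord j.
rewrite (@big_cat_nat _ _ _ (d - j.+1) 0 d _ _ (leq0n _) (leq_subr _ _)) /=.
rewrite big_nat_cond big1 ?add0n; last first.
  by move=> k /andP [/andP [_ hk] _]; rewrite leqNgt hk.
rewrite big_nat_cond (eq_bigr (fun _ => 1%N)); last first.
  by move=> k /andP [/andP [hk _] _]; rewrite hk.
by rewrite -big_nat_cond sum_nat_const_nat muln1 subKn.
Qed.

Lemma Zabs_int (z : Z) : Z.abs z = Z.of_nat (absz (int_of_Z z)).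
Proof.
case: z => [|p|p] //=.
  by rewrite positive_nat_Z.
congr Z.pos; apply: Pos2Nat.inj; rewrite SuccNat2Pos.id_succ prednK //.
apply/ssrnat.ltP; exact: Pos2Nat.is_pos.
Qed.

Lemma diag_le_det n (H : 'M[int]_n) (k : 'I_n) :
  (forall i j : 'I_n, (i < j)%N -> H i j = 0) -> \det H != 0 ->
  (absz (H k k) <= absz (\det H))%N.
Proof.
move=> tH hH; have nz := trig_diag_nz tH hH.
rewrite det_trig; last exact/is_trig_mxP.
rewrite (bigD1 k) //= abszM -{1}(muln1 (absz (H k k))) leq_mul2l.
apply/orP; right; rewrite (big_morph absz abszM (erefl _)) /=.
by apply: prodn_gt0 => i; rewrite absz_gt0.
Qed.
Lemma repl_mul n (H : 'M[int]_n) (U : 'M[int]_n) k beta :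
  repl (H *m U) k (beta *m U) = repl H k beta *m U.
Proof.
apply/matrixP => i j; rewrite !mxE; case: eqP => [->|hik].
  by apply: eq_bigr => m _; rewrite mxE eqxx.
by apply: eq_bigr => m _; rewrite mxE (introF eqP hik).
Qed.

Lemma Zpow2 i : Z.of_nat (2 ^ i)%N = Z.pow (Zpos (xO xH)) (Z.of_nat i).
Proof.
elim: i => [|i IH] //.
rewrite expnS mulnE Nat2Z.inj_mul IH [Z.of_nat i.+1]Nat2Z.inj_succ Z.pow_succ_r //.
exact: Nat2Z.is_nonneg.
Qed.

Lemma main_thm (d : nat) (Id : nat) (L : vec -> Prop) :
  is_I d Id ->
  is_lattice d L ->
  perfect d L ->
  exists f : nat -> vec,
    is_Zbasis d L f /\
    forall v, minimal_vec d L v ->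
      forall beta : nat -> Z, (forall j, v j = zcomb d beta f j) ->
        forall i, (i < d)%coq_nat ->
          Z.le (Z.abs (beta i)) (Z.mul (Z.pow (Zpos (xO xH)) (Z.of_nat i)) (Z.of_nat Id)).
Proof.
move=> [hI _] [b [hb hL0]] hP.
have hL := LP hL0.
have [W [hW hWm]] := get_W hb hL hP.
have [U [H [uU eW tH rH]]] := tri hW.
pose H' : 'M[int]_d := \matrix_(i, j) H i (rev_ord j).
pose U' : 'M[int]_d := \matrix_(i, j) U (rev_ord i) j.
have eW' : W = H' *m U'.
  rewrite eW; apply/matrixP => i j; rewrite !mxE.
  rewrite (reindex_inj rev_ord_inj) /=; apply: eq_bigr => k _.
  by rewrite !mxE.
have uU' : U' \in unitmx.
  pose V' : 'M[int]_d := \matrix_(i, j) (invmx U) i (rev_ord j).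
  suff /mulmx1_unit [] : U' *m V' = 1%:M by [].
  apply/matrixP => i j; rewrite !mxE -(inj_eq rev_ord_inj).
  have := congr1 (fun M : 'M[int]_d => M (rev_ord i) (rev_ord j)) (mulmxV uU).
  rewrite /= !mxE => <-; apply: eq_bigr => k _; by rewrite !mxE.
have detU1 : absz (\det U') = 1%N := unit_int_det uU'.
have detH' : absz (\det H') = absz (\det W) by rewrite eW' det_mulmx abszM detU1 muln1.
have detHW : absz (\det H) = absz (\det W) by rewrite eW det_mulmx abszM (unit_int_det uU) muln1.
have hH' : \det H' != 0 by rewrite -absz_eq0 detH' absz_eq0.
have hH : \det H != 0 by rewrite -absz_eq0 detHW absz_eq0.
exists (fam U' b); split.
  split.
    move=> i hi'; have hi : (i < d)%N by lia.
    by apply/hL; exists (row (Ordinal hi) U') => j; rewrite (fam_ord _ _ (Ordinal hi)).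
  split.
    move=> v /hL [r hr]; exists (rowfun (r *m invmx U')) => j.
    by rewrite zcomb_combo rowfunK -combo_mul mulmxKV.
  move=> c hc i hi'; have hi : (i < d)%N by lia.
  have e0 : rowof d c *m U' = 0.
    apply: (combo_inj hb) => j _; by rewrite combo_mul -zcomb_combo hc.
  have : rowof d c = 0 by rewrite -(mulmxK uU' (rowof d c)) e0 mul0mx.
  move/rowP/(_ (Ordinal hi)); rewrite !mxE => /(congr1 Z_of_int).
  by rewrite int_of_ZK.
move=> v hv beta hbeta i hi'; have hi : (i < d)%N by lia.
pose be := rowof d beta.
have hvb j : v j = combo (be *m U') b j by rewrite hbeta zcomb_combo combo_mul.
have hD k : (absz (\det (repl H' k be)) <= Id)%N.
  have -> : absz (\det (repl H' k be)) = absz (\det (repl W k (be *m U'))).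
    by rewrite eW' repl_mul det_mulmx abszM detU1 muln1.
  apply: (det_le hb hL0 hI) => m.
  rewrite fam_ord; case: (eqVneq m k) => [->|hmk].
    apply: (minimal_ext hL _ hv) => j; rewrite hvb; congr (combo _ b j).
    by apply/rowP => j'; rewrite !mxE eqxx.
  apply: (minimal_ext hL _ (hWm m)) => j; rewrite fam_ord; congr (combo _ b j).
  by apply/rowP => j'; rewrite !mxE (negbTE hmk).
pose j := Ordinal hi.
have hHj k : (absz (H' k j) <= absz (\det H'))%N.
  rewrite mxE detH' -detHW; apply: leq_trans (rH _ _) _; exact: diag_le_det.
have hb1 := bound hH' hD hHj.
have hcard : (#|[pred k | H' k j != 0]| <= j.+1)%N.
  apply: card_tail => k; rewrite inE mxE; apply: contraR; rewrite -ltnNge => hk.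
  by apply/eqP; apply: tH => /=; exact: hk.
have hexp : (j.+1 <= 2 ^ j)%N by apply: ltn_expl.
have habs : (absz (int_of_Z (beta i)) <= 2 ^ i * Id)%N.
  have : absz (be 0 j) = absz (int_of_Z (beta i)) by rewrite mxE.
  move=> <-; apply: leq_trans hb1 _; rewrite mulnC leq_mul2r; apply/orP; right.
  exact: leq_trans hcard hexp.
rewrite Zabs_int; have := habs; move/ssrnat.leP/Nat2Z.inj_le.
by rewrite mulnE Nat2Z.inj_mul Zpow2.
Qed.

Theorem theorem17p1 (d : nat) (Id : nat) (L : vec -> Prop) :
  is_I d Id ->
  is_lattice d L ->
  perfect d L ->
  exists f : nat -> vec,
    is_Zbasis d L f /\
    forall v, minimal_vec d L v ->
      forall beta : nat -> Z, (forall j, v j = zcomb d beta f j) ->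
        forall i, (i < d)%coq_nat ->
          Z.le (Z.abs (beta i)) (Z.mul (Z.pow (Zpos (xO xH)) (Z.of_nat i)) (Z.of_nat Id)).
Proof. exact: main_thm. Qed.
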